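(* Let $\beta\ge0$ and $\rho\in(0,1]$. For every $N_1,N_2\in\mathbb N$ and every $\omega$, \[ \log\tilde{\mathcal Z}_{N_1+N_2,\omega}(\rho)\ \ge\ \log\tilde{\mathcal Z}_{N_1,\omega}(\rho)+\log\tilde{\mathcal Z}_{N_2,\theta^{N_1}\omega}(\rho), \] where $(\theta\omega)_n=\omega_{n+1}$ (with the convention $\log0=-\infty$).
   Context: Let $\tau=(\tau_j)_{j\ge0}$ be a renewal process with $\tau_0=0$ and i.i.d. increments with values in $\mathbb N$, law $\mathbf P$, expectation $\mathbf E$; $K(n)=\mathbf P(\tau_1=n)>0$ for all $n$, $K(n)\sim C_Kn^{-(1+\alpha)}$, $\alpha>0$, $C_K>0$. $\delta_n=\mathbf 1_{n\in\{\tau_0,\tau_1,\dots\}}$. Let $\omega=(\omega_n)_{n\ge1}$ be a real sequence (in the paper, i.i.d. with law $\mathbb P$, independent of $\tau$). For $N\in\mathbb N$, $m\in\{0,\dots,N\}$ let $\mathcal Z_{N,m,\omega,\beta}=\mathbf E[\exp(\beta\sum_{j=1}^N\omega_j\delta_j)\mathbf 1_{\tau_m=N}]$ (which is $0$ if $m=0$), and for $\rho\in(0,1]$ let $\tilde{\mathcal Z}_{N,\omega}(\rho):=\min_{m\in\{\lfloor\rho N\rfloor,\lceil\rho N\rceil\}}\mathcal Z_{N,m,\omega,\beta}$. *)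

(* Defs.v *)
From Stdlib Require Import Reals Lra Lia ZArith.
From Coquelicot Require Import Coquelicot.
Open Scope R_scope.

(* Standing assumptions on the inter-arrival law K of the renewal process:
   K n = P(tau_1 = n), with values in N = {1,2,...}: K 0 = 0, K n > 0 for
   n >= 1, sum_n K n = 1, and K n ~ C_K n^{-(1+alpha)}. *)
Definition renewal_kernel (K : nat -> R) (alpha CK : R) : Prop :=
  K 0%nat = 0 /\
  (forall n : nat, (1 <= n)%nat -> 0 < K n) /\
  is_series K 1 /\
  0 < alpha /\ 0 < CK /\
  is_lim_seq (fun n : nat => K n * Rpower (INR n) (1 + alpha)) CK.

Fixpoint sum1 (f : nat -> R) (n : nat) : R :=
  match n with
  | O => 0
  | S k => sum1 f k + f (S k)
  end.

(* W K beta omega m a N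
     = E[ exp(beta * sum_{j=1}^{N-a} omega_{a+j} delta^{(a)}_{j}) 1_{tau_m = N - a} ]
   for the renewal process started at a, i.e. the sum over all compositions
   (t_1,...,t_m) of N - a into m positive parts of
     prod_i K(t_i) * exp(beta * sum_i omega_{a + t_1 + ... + t_i}).
   This is the expectation unfolded by conditioning on the first jump. *)
Fixpoint W (K : nat -> R) (beta : R) (omega : nat -> R) (m a N : nat) : R :=
  match m with
  | O => if Nat.eqb a N then 1 else 0
  | S m' => sum1 (fun t => K t * exp (beta * omega (a + t)%nat)
                           * W K beta omega m' (a + t)%nat N) (N - a)
  end.

(* Z_{N,m,omega,beta} = E[exp(beta sum_{j=1}^N omega_j delta_j) 1_{tau_m = N}];
   omega is indexed from 1 (omega 0 is unused). *)
Definition Zpin (K : nat -> R) (beta : R) (N m : nat) (omega : nat -> R) : R :=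
  W K beta omega m 0 N.

Definition nfloor (x : R) : nat := Z.to_nat (Int_part x).
Definition nceil (x : R) : nat := Z.to_nat (- Int_part (- x)).

Definition Ztilde (K : nat -> R) (beta : R) (N : nat) (omega : nat -> R) (rho : R) : R :=
  Rmin (Zpin K beta N (nfloor (rho * INR N)) omega)
       (Zpin K beta N (nceil (rho * INR N)) omega).

Definition shift (k : nat) (omega : nat -> R) : nat -> R := fun n => omega (n + k)%nat.

Definition elog (x : R) : Rbar := if Rlt_dec 0 x then Finite (ln x) else m_infty.

(* Main.v *)
Require Import Defs.
From Stdlib Require Import Reals Lra Lia ZArith.
From Coquelicot Require Import Coquelicot.
Open Scope R_scope.

Lemma sum1_ext f g n : (forall t, f t = g t) -> sum1 f n = sum1 g n.
Proof. intros H; induction n; simpl; auto. rewrite IHn, H; auto. Qed.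

Lemma sum1_nonneg f n : (forall t, 0 <= f t) -> 0 <= sum1 f n.
Proof. intros H; induction n; simpl. lra. specialize (H (S n)); lra. Qed.

Lemma sum1_le f g n : (forall t, f t <= g t) -> sum1 f n <= sum1 g n.
Proof. intros H; induction n; simpl. lra. specialize (H (S n)); lra. Qed.

Lemma sum1_mono f n p : (forall t, 0 <= f t) -> (n <= p)%nat -> sum1 f n <= sum1 f p.
Proof. intros H Hp; induction Hp. lra. simpl. specialize (H (S m)); lra. Qed.

Lemma sum1_mulr f n c : sum1 f n * c = sum1 (fun t => f t * c) n.
Proof. induction n; simpl. ring. rewrite <- IHn; ring. Qed.

Section S.
Variables (K : nat -> R) (beta : R) (Kpos : forall n, 0 <= K n).

Lemma W_nonneg o m : forall a N, 0 <= W K beta o m a N.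
Proof.
  induction m; intros a N; simpl.
  - destruct (Nat.eqb a N); lra.
  - apply sum1_nonneg; intro t. apply Rmult_le_pos; [apply Rmult_le_pos|]; auto.
    left; apply exp_pos.
Qed.

Lemma W_gt o m a N : (N < a)%nat -> W K beta o m a N = 0.
Proof.
  intros H; destruct m; simpl.
  - destruct (Nat.eqb_spec a N); [lia|auto].
  - replace (N - a)%nat with 0%nat by lia. reflexivity.
Qed.

Lemma W_concat o m1 m2 : forall a M N,
  W K beta o m1 a M * W K beta o m2 M N <= W K beta o (m1 + m2) a N.
Proof.
  induction m1; intros a M N.
  - simpl. destruct (Nat.eqb_spec a M).
    + subst; lra.
    + rewrite Rmult_0_l. apply W_nonneg.
  - destruct (le_lt_dec M N) as [HMN|HMN].
    2:{ rewrite (W_gt o m2 M N HMN), Rmult_0_r. apply W_nonneg. }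
    simpl. rewrite sum1_mulr.
    apply Rle_trans with (sum1 (fun t => K t * exp (beta * o (a + t)%nat) *
       W K beta o m1 (a + t)%nat M * W K beta o m2 M N) (N - a)).
    + apply sum1_mono; [|lia]. intro t.
      apply Rmult_le_pos; [apply Rmult_le_pos; [apply Rmult_le_pos|]|]; auto;
        try apply W_nonneg. left; apply exp_pos.
    + apply sum1_le; intro t. rewrite Rmult_assoc.
      apply Rmult_le_compat_l. apply Rmult_le_pos; auto. left; apply exp_pos.
      apply IHm1.
Qed.

Lemma W_shift (o : nat -> R) m : forall a N (k : nat),
  W K beta (Defs.shift k o) m a N = W K beta o m (a + k) (N + k).
Proof.
  induction m; intros a N k; simpl.
  - destruct (Nat.eqb_spec a N), (Nat.eqb_spec (a + k) (N + k)); auto; lia.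
  - replace (N + k - (a + k))%nat with (N - a)%nat by lia.
    apply sum1_ext; intro t. rewrite IHm. unfold Defs.shift.
    replace (a + t + k)%nat with (a + k + t)%nat by lia. reflexivity.
Qed.

End S.

Lemma fl_bounds x : 0 <= x ->
  (0 <= Int_part x)%Z /\ IZR (Int_part x) <= x < IZR (Int_part x) + 1.
Proof.
  intros H. destruct (base_Int_part x) as [H1 H2].
  split; [|lra]. assert (-1 < Int_part x)%Z; [|lia].
  apply lt_IZR. lra.
Qed.

Lemma ce_bounds x : 0 <= x ->
  (0 <= - Int_part (- x))%Z /\ IZR (- Int_part (- x)) - 1 < x <= IZR (- Int_part (-x)).
Proof.
  intros H. destruct (base_Int_part (- x)) as [H1 H2]. rewrite opp_IZR.
  split; [|lra]. assert (Int_part (- x) <= 0)%Z; [|lia].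
  apply le_IZR. lra.
Qed.

Lemma split_m (x1 x2 : R) (m : nat) : 0 <= x1 -> 0 <= x2 ->
  (m = Defs.nfloor (x1 + x2) \/ m = Defs.nceil (x1 + x2)) ->
  exists m1 m2, (m1 = Defs.nfloor x1 \/ m1 = Defs.nceil x1) /\
                (m2 = Defs.nfloor x2 \/ m2 = Defs.nceil x2) /\ m = (m1 + m2)%nat.
Proof.
  intros H1 H2 Hm. unfold Defs.nfloor, Defs.nceil in *.
  destruct (fl_bounds x1 H1) as [a1 [b1 c1]].
  destruct (fl_bounds x2 H2) as [a2 [b2 c2]].
  destruct (fl_bounds (x1+x2) ltac:(lra)) as [a [b c]].
  destruct (ce_bounds x1 H1) as [d1 [e1 g1]].
  destruct (ce_bounds x2 H2) as [d2 [e2 g2]].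
  destruct (ce_bounds (x1+x2) ltac:(lra)) as [d [e g]].
  set (F1 := Int_part x1) in *. set (F2 := Int_part x2) in *.
  set (F := Int_part (x1 + x2)) in *.
  set (C1 := (- Int_part (- x1))%Z) in *. set (C2 := (- Int_part (- x2))%Z) in *.
  set (C := (- Int_part (- (x1 + x2)))%Z) in *.
  assert (i1 : (F1 + F2 <= F)%Z). { assert (IZR (F1 + F2) < IZR (F + 1)).
    rewrite !plus_IZR; simpl; lra. apply lt_IZR in H. lia. }
  assert (i2 : (C <= C1 + C2)%Z). { assert (IZR (C - 1) < IZR (C1 + C2)).
    rewrite plus_IZR, minus_IZR; simpl; lra. apply lt_IZR in H. lia. }
  assert (i3 : (F <= C)%Z). { apply le_IZR; lra. }
  assert (i4 : (F1 <= C1)%Z). { apply le_IZR; lra. }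
  assert (i5 : (F2 <= C2)%Z). { apply le_IZR; lra. }
  assert (i6 : (C1 < F1 + 1 + 1)%Z). { assert (IZR (C1 - 1) < IZR (F1 + 1)).
    rewrite plus_IZR, minus_IZR; simpl; lra. apply lt_IZR in H. lia. }
  assert (i7 : (C2 < F2 + 1 + 1)%Z). { assert (IZR (C2 - 1) < IZR (F2 + 1)).
    rewrite plus_IZR, minus_IZR; simpl; lra. apply lt_IZR in H. lia. }
  clearbody F1 F2 F C1 C2 C.
  assert (Hz : exists z, (z = F \/ z = C) /\ m = Z.to_nat z) by
    (destruct Hm; eauto).
  destruct Hz as [z [Hz ->]].
  assert (z = F1 + F2 \/ z = F1 + C2 \/ z = C1 + F2 \/ z = C1 + C2)%Z as Hc by lia.
  destruct Hc as [Hc|[Hc|[Hc|Hc]]].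
  - exists (Z.to_nat F1), (Z.to_nat F2); repeat split; auto; lia.
  - exists (Z.to_nat F1), (Z.to_nat C2); repeat split; auto; lia.
  - exists (Z.to_nat C1), (Z.to_nat F2); repeat split; auto; lia.
  - exists (Z.to_nat C1), (Z.to_nat C2); repeat split; auto; lia.
Qed.

Theorem lemma6p1 (K : nat -> R) (alpha CK : R) (beta rho : R)
  (hK : renewal_kernel K alpha CK)
  (hbeta : 0 <= beta) (hrho0 : 0 < rho) (hrho1 : rho <= 1)
  (N1 N2 : nat) (hN1 : (1 <= N1)%nat) (hN2 : (1 <= N2)%nat)
  (omega : nat -> R) :
  Rbar_le
    (Rbar_plus (elog (Ztilde K beta N1 omega rho))
               (elog (Ztilde K beta N2 (Defs.shift N1 omega) rho)))
    (elog (Ztilde K beta (N1 + N2) omega rho)).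
Proof.
  assert (Kpos : forall n, 0 <= K n).
  { destruct hK as [h0 [h1 _]]. intros [|n]. lra. left; apply h1; lia. }
  assert (Zt_nonneg : forall N o, 0 <= Ztilde K beta N o rho).
  { intros N o. unfold Ztilde, Rmin. destruct Rle_dec; apply W_nonneg; auto. }
  assert (key : Ztilde K beta N1 omega rho * Ztilde K beta N2 (Defs.shift N1 omega) rho
                <= Ztilde K beta (N1 + N2) omega rho).
  { assert (Hx1 : 0 <= rho * INR N1) by (apply Rmult_le_pos; [lra| apply pos_INR]).
    assert (Hx2 : 0 <= rho * INR N2) by (apply Rmult_le_pos; [lra| apply pos_INR]).
    assert (Hx : rho * INR (N1 + N2) = rho * INR N1 + rho * INR N2)
      by (rewrite plus_INR; ring).
    assert (gen : forall m, (m = Defs.nfloor (rho * INR (N1 + N2)) \/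
                             m = Defs.nceil (rho * INR (N1 + N2))) ->
      Ztilde K beta N1 omega rho * Ztilde K beta N2 (Defs.shift N1 omega) rho
      <= Zpin K beta (N1 + N2) m omega).
    { intros m Hm. rewrite Hx in Hm.
      destruct (split_m _ _ m Hx1 Hx2 Hm) as [m1 [m2 [Hm1 [Hm2 ->]]]].
      unfold Zpin.
      eapply Rle_trans; [| apply (W_concat K beta Kpos omega m1 m2 0 N1)].
      replace (W K beta omega m2 N1 (N1 + N2)) with
        (W K beta (Defs.shift N1 omega) m2 0 N2)
        by (rewrite W_shift; f_equal; lia).
      apply Rmult_le_compat; try apply Zt_nonneg.
      - unfold Ztilde, Zpin. destruct Hm1; subst; [apply Rmin_l | apply Rmin_r].
      - unfold Ztilde, Zpin. destruct Hm2; subst; [apply Rmin_l | apply Rmin_r]. }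
    unfold Ztilde at 3. apply Rmin_glb; apply gen; auto. }
  unfold elog.
  destruct (Rlt_dec 0 (Ztilde K beta N1 omega rho)) as [p1|p1];
  destruct (Rlt_dec 0 (Ztilde K beta N2 (Defs.shift N1 omega) rho)) as [p2|p2];
  destruct (Rlt_dec 0 (Ztilde K beta (N1 + N2) omega rho)) as [p|p]; simpl; auto.
  - rewrite <- ln_mult by auto. apply ln_le; auto. apply Rmult_lt_0_compat; auto.
  - exfalso. apply p. eapply Rlt_le_trans; [|apply key]. apply Rmult_lt_0_compat; auto.
Qed.
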